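(* For $\mu\in\mathbb C$ and complex numbers $x_1,\dots,x_N$ and $y_1,\dots,y_N$ (pairwise distinct within each family and $x_a\neq y_b$, so that all expressions are defined), $$\mathcal I^{(\mu)}_N(\{x\},\{y\})=(-1)^N\mathcal A^-_{\{x\}}\!\left[\mu E^+_{\{y\}}\right]=(-1)^N\mathcal A^+_{\{y\}}\!\left[\mu E^-_{\{x\}}\right].$$
   Context: Let $\eta\in\mathbb C\setminus\{0\}$. For a family $\{x\}=\{x_1,\dots,x_M\}$ and $y\in\mathbb C$, $E^\pm_{\{x\}}(y)=\prod_{n=1}^M\frac{y-x_n\pm\eta}{y-x_n}$. With $V(x_1,\dots,x_M)=\prod_{1\le b<a\le M}(x_a-x_b)$, for pairwise distinct $x_a$ and a function $f$ defined there, $\mathcal A^\pm_{\{x\}}[f]=\det_{1\le a,b\le M}[x_a^{b-1}-f(x_a)(x_a\pm\eta)^{b-1}]/V(x_1,\dots,x_M)$. Let $t_\mu(x)=\frac\mu x-\frac1{x+\eta}$. The generalized Izergin determinant is $$\mathcal I^{(\mu)}_N(\{x\},\{y\})=\frac{\prod_{a,b=1}^N(x_a-y_b+\eta)}{V(x_1,\dots,x_N)V(y_N,\dots,y_1)}\det_{1\le a,b\le N}\big[t_\mu(x_a-y_b)\big].$$ *)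

(* Defs.v *)
From HB Require Import structures.
From mathcomp Require Import all_boot all_order all_algebra.
From mathcomp Require Import complex reals.
Set Implicit Arguments. Unset Strict Implicit. Unset Printing Implicit Defensive.
Import Order.TTheory GRing.Theory Num.Theory.
Local Open Scope ring_scope.

(* V(x_1,...,x_M) = prod_{1<=b<a<=M} (x_a - x_b); indices 1..M are 'I_M (0-based) *)
Definition Vdm (C : comRingType) (M : nat) (x : 'I_M -> C) : C :=
  \prod_(a < M) \prod_(b < M | (b < a)%N) (x a - x b).

Definition Eplus (C : fieldType) (eta : C) (M : nat) (x : 'I_M -> C) (y : C) : C :=
  \prod_(n < M) ((y - x n + eta) / (y - x n)).
Definition Eminus (C : fieldType) (eta : C) (M : nat) (x : 'I_M -> C) (y : C) : C :=
  \prod_(n < M) ((y - x n - eta) / (y - x n)).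

(* A^+_{x}[f] and A^-_{x}[f]; column b : 'I_M carries exponent b = (b-1 in 1-based) *)
Definition Aplus (C : fieldType) (eta : C) (M : nat) (x : 'I_M -> C) (f : C -> C) : C :=
  \det (\matrix_(a < M, b < M) (x a ^+ b - f (x a) * (x a + eta) ^+ b)) / Vdm x.
Definition Aminus (C : fieldType) (eta : C) (M : nat) (x : 'I_M -> C) (f : C -> C) : C :=
  \det (\matrix_(a < M, b < M) (x a ^+ b - f (x a) * (x a - eta) ^+ b)) / Vdm x.

Definition tmu (C : fieldType) (eta mu z : C) : C := mu / z - 1 / (z + eta).

(* generalized Izergin determinant; V(y_N,...,y_1) is Vdm of the reversed family *)
Definition Izergin (C : fieldType) (eta mu : C) (N : nat) (x y : 'I_N -> C) : C :=
  (\prod_(a < N) \prod_(b < N) (x a - y b + eta))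
  / (Vdm x * Vdm (fun i : 'I_N => y (rev_ord i)))
  * \det (\matrix_(a < N, b < N) tmu eta mu (x a - y b)).

(* Main.v *)
Require Import Defs.
From HB Require Import structures.
From mathcomp Require Import all_boot all_order all_algebra all_fingroup.
From mathcomp Require Import complex reals.
From mathcomp Require Import zify ring.
Import Order.TTheory GRing.Theory Num.Theory.
Local Open Scope ring_scope.
Lemma det_add_rows (R : comNzRingType) n (A B : 'M[R]_n) :
  \det (A + B) = \sum_(f : {ffun 'I_n -> bool})
     \det (\matrix_(i, j) (if f i then B i j else A i j)).
Proof.
rewrite /determinant.
under eq_bigr => s _.
  rewrite (eq_bigr (fun i => \sum_(c : bool) (if c then B i (s i) else A i (s i)))); last first.
    by move=> i _; rewrite big_bool /= mxE addrC.
  rewrite bigA_distr_bigA mulr_sumr.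
  over.
rewrite exchange_big /=; apply: eq_bigr => f _; apply: eq_bigr => s _.
by congr (_ * _); apply: eq_bigr => i _; rewrite mxE.
Qed.

Lemma det_scale_rows (R : comNzRingType) n (c : 'I_n -> R) (A : 'M[R]_n) :
  \det (\matrix_(i, j) (c i * A i j)) = \prod_i c i * \det A.
Proof.
rewrite /determinant mulr_sumr; apply: eq_bigr => s _.
rewrite mulrCA; congr (_ * _).
by rewrite -big_split /=; apply: eq_bigr => i _; rewrite mxE.
Qed.

Lemma prod_tri (R : comNzRingType) n (F : 'I_n -> 'I_n -> R) :
  \prod_(i < n) \prod_(j < n | (i < j)%N) F i j = \prod_(j < n) \prod_(i < n | (i < j)%N) F i j.
Proof.
under eq_bigr do rewrite big_mkcond.
rewrite exchange_big; apply: eq_bigr => j _.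
by rewrite [RHS]big_mkcond.
Qed.

Lemma det_pow (R : comNzRingType) n (u : 'I_n -> R) :
  \det (\matrix_(a, b) u a ^+ b) = Vdm u.
Proof.
have -> : \matrix_(a, b) u a ^+ b = (Vandermonde n (\row_j u j))^T.
  by apply/matrixP => i j; rewrite !mxE.
rewrite det_tr det_Vandermonde /Vdm prod_tri.
by apply: eq_bigr => a _; apply: eq_bigr => b _; rewrite !mxE.
Qed.

Lemma Vdm_eq (R : comNzRingType) n (u w : 'I_n -> R) :
  (forall a b, u a - u b = w a - w b) -> Vdm u = Vdm w.
Proof. by move=> H; apply: eq_bigr => a _; apply: eq_bigr => b _. Qed.

Lemma Vdm_rev (R : comNzRingType) n (y : 'I_n -> R) :
  Vdm (fun i => y (rev_ord i)) = \prod_(a < n) \prod_(b < n | (a < b)%N) (y a - y b).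
Proof.
rewrite /Vdm (reindex_inj rev_ord_inj) /=; apply: eq_bigr => a _.
rewrite (reindex_inj rev_ord_inj) /=; apply: eq_big => [b|b _]; rewrite ?rev_ordK //=.
have := ltn_ord a; have := ltn_ord b; lia.
Qed.

Lemma Vdm_neq0 (F : fieldType) n (y : 'I_n -> F) : injective y -> Vdm y != 0.
Proof.
move=> Hy; apply/prodf_neq0 => a _; apply/prodf_neq0 => b hb.
rewrite subr_eq0; apply/eqP => /Hy e; by rewrite e ltnn in hb.
Qed.

Lemma prod_ne (R : comNzRingType) n (y : 'I_n -> R) :
  \prod_(b < n) \prod_(c < n | c != b) (y b - y c) = Vdm y * Vdm (fun i => y (rev_ord i)).
Proof.
rewrite Vdm_rev /Vdm -big_split; apply: eq_bigr => b _.
rewrite (bigID (fun c : 'I_n => (c < b)%N)) /=; congr (_ * _); apply: eq_bigl => c;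
  rewrite -(inj_eq val_inj) /=; lia.
Qed.

Lemma cauchy_poly (F : fieldType) n (u y : 'I_n -> F) : injective y ->
  \det (\matrix_(a, b) \prod_(c < n | c != b) (u a - y c))
  = Vdm u * Vdm (fun i => y (rev_ord i)).
Proof.
move=> Hy.
pose P (b : 'I_n) : {poly F} := \prod_(c < n | c != b) ('X - (y c)%:P).
pose K := \matrix_(k < n, b < n) (P b)`_k.
have HM : forall v : 'I_n -> F, \matrix_(a, b) \prod_(c < n | c != b) (v a - y c)
    = (\matrix_(a < n, k < n) v a ^+ k) *m K.
  move=> v; apply/matrixP => a b; rewrite !mxE.
  have hs : (size (P b) <= n)%N.
    apply: leq_trans (size_poly_prod_leq _ _) _.
    rewrite (eq_bigr (fun _ => 2%N)); last by move=> c _; rewrite size_XsubC.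
    rewrite sum_nat_const.
    have : #|[pred c : 'I_n | c != b]| = n.-1 by have := cardC1 b; rewrite card_ord.
    move=> ->; have := ltn_ord b; lia.
  rewrite [RHS](eq_bigr (fun k : 'I_n => (P b)`_k * v a ^+ k)); last by move=> k _; rewrite !mxE mulrC.
  rewrite -(horner_coef_wide (v a) hs) /P horner_prod.
  by apply: eq_bigr => c _; rewrite hornerXsubC.
have Hy0 : \det K * Vdm y = Vdm y * Vdm (fun i => y (rev_ord i)).
  rewrite -prod_ne mulrC -det_pow -det_mulmx -HM.
  have -> : \matrix_(a, b) \prod_(c < n | c != b) (y a - y c)
        = diag_mx (\row_b \prod_(c < n | c != b) (y b - y c)).
    apply/matrixP => i j; rewrite !mxE.
    case: eqP => [->|/eqP hij] /=; first by rewrite ?mulr1n.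
    by rewrite mulr0n (bigD1 i hij) /= subrr mul0r.
  by rewrite det_diag; apply: eq_bigr => b _; rewrite mxE.
rewrite HM det_mulmx det_pow; congr (_ * _).
have h := @Vdm_neq0 F n y Hy. apply: (mulIf h). by rewrite Hy0 mulrC.
Qed.

Lemma cauchy (F : fieldType) n (u y : 'I_n -> F) : injective y ->
  (forall a b, u a - y b != 0) ->
  \det (\matrix_(a, b) (u a - y b)^-1)
  = Vdm u * Vdm (fun i => y (rev_ord i)) / \prod_(a < n) \prod_(b < n) (u a - y b).
Proof.
move=> Hy Hne.
have Hr : \prod_(a < n) \prod_(b < n) (u a - y b) != 0.
  by apply/prodf_neq0 => a _; apply/prodf_neq0 => b _.
rewrite -(@cauchy_poly F n u y Hy); apply: (mulIf Hr); rewrite divfK // mulrC -det_scale_rows.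
congr (\det _); apply/matrixP => a b; rewrite !mxE (bigD1 b) //= mulrAC mulfV ?mul1r //.
Qed.

Lemma first_eq (F : fieldType) (eta mu : F) n (x y : 'I_n -> F) :
  injective x -> injective y -> (forall a b, x a - y b != 0) ->
  (forall a b, x a - y b + eta != 0) ->
  Izergin eta mu x y = (-1) ^+ n * Aminus eta x (fun z => mu * Eplus eta y z).
Proof.
move=> Hx Hy Hxy Hxye.
set g := fun z => mu * Eplus eta y z.
pose u (f : {ffun 'I_n -> bool}) a := if f a then x a else x a + eta.
pose c (f : {ffun 'I_n -> bool}) a := if f a then mu else -1.
pose c' (f : {ffun 'I_n -> bool}) a := if f a then - g (x a) else 1.
have Hu : forall f a b, u f a - y b != 0.
  by move=> f a b; rewrite /u; case: (f a) => //; rewrite addrAC.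
have HI : \det (\matrix_(a, b) tmu eta mu (x a - y b)) = \sum_f \prod_a c f a *
    (Vdm (u f) * Vdm (fun i => y (rev_ord i)) / \prod_(a < n) \prod_(b < n) (u f a - y b)).
  have -> : \matrix_(a, b) tmu eta mu (x a - y b) =
     \matrix_(a, b) (-1 * (x a + eta - y b)^-1) + \matrix_(a, b) (mu * (x a - y b)^-1).
    apply/matrixP => a b; rewrite !mxE /tmu addrC mulN1r div1r.
    by rewrite [x a + eta - y b]addrAC.
  rewrite det_add_rows; apply: eq_bigr => f _.
  rewrite -(@cauchy F n (u f) y Hy (Hu f)) -det_scale_rows; congr (\det _).
  by apply/matrixP => a b; rewrite !mxE /c /u; case: (f a).
have HA : \det (\matrix_(a, b) (x a ^+ b - g (x a) * (x a - eta) ^+ b))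
    = \sum_f \prod_a c' f a * Vdm (u f).
  have -> : \matrix_(a, b) (x a ^+ b - g (x a) * (x a - eta) ^+ b) =
     \matrix_(a, b) (x a ^+ b) + \matrix_(a < n, b < n) (- g (x a) * (x a - eta) ^+ b).
    by apply/matrixP => a b; rewrite !mxE mulNr.
  rewrite det_add_rows; apply: eq_bigr => f _.
  pose w a := if f a then x a - eta else x a.
  have -> : Vdm (u f) = Vdm w.
    by apply: Vdm_eq => a b; rewrite /u /w; case: (f a); case: (f b); ring.
  rewrite -det_pow -det_scale_rows; congr (\det _).
  by apply/matrixP => a b; rewrite !mxE /c' /w; case: (f a); rewrite ?mul1r.
rewrite /Izergin /Aminus HI HA.
rewrite [LHS]mulr_sumr [X in _ = _ * X]mulr_suml [RHS]mulr_sumr.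
apply: eq_bigr => f _.
have HQ : \prod_(a < n) \prod_(b < n) (u f a - y b) != 0.
  by apply/prodf_neq0 => a _; apply/prodf_neq0 => b _.
have HVy := @Vdm_neq0 F n _ Hy.
have HVx := @Vdm_neq0 F n _ Hx.
have Hp : forall a, \prod_(b < n) (x a - y b + eta) != 0.
  by move=> a; apply/prodf_neq0 => b _.
have K : \prod_a c f a * \prod_(a < n) \prod_(b < n) (x a - y b + eta)
        / \prod_(a < n) \prod_(b < n) (u f a - y b) = (-1) ^+ n * \prod_a c' f a.
  rewrite -mulrA -prodf_div -big_split /=.
  have -> : (-1 : F) ^+ n = \prod_(a < n) (-1) by rewrite prodr_const card_ord.
  rewrite -big_split /=; apply: eq_bigr => a _; rewrite /c /c' /u /g.
  case: (f a).
    by rewrite /Eplus prodf_div mulN1r opprK mulrA.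
  rewrite [X in _ / X](eq_bigr (fun b => x a - y b + eta)); last by move=> b _; rewrite addrAC.
  by rewrite divff //.
have -> : (-1) ^+ n * (\prod_a c' f a * Vdm (u f) / Vdm x) =
   (\prod_a c f a * \prod_(a < n) \prod_(b < n) (x a - y b + eta)
        / \prod_(a < n) \prod_(b < n) (u f a - y b)) * Vdm (u f) / Vdm x.
  by rewrite K !mulrA.
have HVry := @Vdm_neq0 F n (fun i => y (rev_ord i)) (fun i j e => rev_ord_inj (Hy _ _ e)).
by field; rewrite HVx HQ HVry.
Qed.

Lemma Vdm_rev_sign (R : comNzRingType) n (y : 'I_n -> R) :
  Vdm (fun i => y (rev_ord i)) = (\prod_(a < n) \prod_(b < n | (a < b)%N) (-1)) * Vdm y.
Proof.
have -> : Vdm y = \prod_(a < n) \prod_(b < n | (a < b)%N) (y b - y a).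
  by rewrite /Vdm prod_tri.
rewrite Vdm_rev -big_split /=; apply: eq_bigr => a _.
by rewrite -big_split /=; apply: eq_bigr => b _; rewrite mulN1r opprB.
Qed.

Lemma sign_sq (F : fieldType) n :
  (\prod_(a < n) \prod_(b < n) (-1 : F)) * (-1) ^+ n = 1.
Proof.
under eq_bigr do rewrite prodr_const card_ord.
rewrite prodr_const card_ord -exprM -[(-1) ^+ (n * n)]signr_odd oddM andbb signr_odd.
by rewrite -expr2 sqrr_sign.
Qed.

Lemma Izergin_sym (F : fieldType) (eta mu : F) n (x y : 'I_n -> F) :
  Izergin (-eta) mu y x = Izergin eta mu x y.
Proof.
rewrite /Izergin.
have -> : \matrix_(a, b) tmu (- eta) mu (y a - x b)
    = (-1) *: (\matrix_(a, b) tmu eta mu (x a - y b))^T.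
  apply/matrixP => a b; rewrite !mxE /tmu mulN1r.
  have h1 : y a - x b = -(x b - y a) by rewrite opprB.
  have h2 : y a - x b + - eta = -(x b - y a + eta) by rewrite opprD opprB.
  by rewrite h2 h1 !invrN !mulrN opprB opprK addrC.
rewrite detZ det_tr !Vdm_rev_sign.
have -> : \prod_(a < n) \prod_(b < n) (y a - x b + - eta)
   = (\prod_(a < n) \prod_(b < n) (-1 : F)) * \prod_(a < n) \prod_(b < n) (x a - y b + eta).
  rewrite exchange_big -big_split /=; apply: eq_bigr => a _.
  by rewrite -big_split /=; apply: eq_bigr => b _; rewrite mulN1r opprD opprB.
have E := sign_sq F n.
set s1 := \prod_(a < n) \prod_(b < n) (-1 : F).
set s := \prod_(a < n) \prod_(b < n | (a < b)%N) (-1 : F).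
rewrite [Vdm y * _]mulrCA [Vdm x * (s * _)]mulrCA [Vdm y * Vdm x]mulrC.
set P := \prod_(a < n) \prod_(b < n) (x a - y b + eta).
set D := \det _.
set Z := s * (Vdm x * Vdm y).
transitivity ((s1 * (-1) ^+ n) * (P / Z * D)); first by ring.
by rewrite E mul1r.
Qed.

Local Open Scope complex_scope.
Theorem mainTheorem6 (R : realType) (eta mu : R[i]) (N : nat) (x y : 'I_N -> R[i]) :
  eta != 0 ->
  injective x -> injective y ->
  (forall a b, x a != y b) ->
  (forall a b, x a - y b + eta != 0) ->
  Izergin eta mu x y = (-1) ^+ N * Aminus eta x (fun z => mu * Eplus eta y z) /\
  Izergin eta mu x y = (-1) ^+ N * Aplus eta y (fun z => mu * Eminus eta x z).
Proof.
move=> _ Hx Hy Hxy Hxye.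
have Hxy' : forall a b, x a - y b != 0 by move=> a b; rewrite subr_eq0.
split; first exact: first_eq.
rewrite -Izergin_sym first_eq //.
- congr (_ * _); rewrite /Aminus /Aplus; congr (\det _ / _).
  by apply/matrixP => a b; rewrite !mxE opprK.
- by move=> a b; rewrite subr_eq0 eq_sym.
- by move=> a b; rewrite -oppr_eq0 opprD opprK opprB; exact: Hxye.
Qed.
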